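(* Let $A$ be an MV-algebra and $d$ a $(\odot,\vee)$-derivation on $A$. The following are equivalent: (1) $d=\mathrm{Id}_A$; (2) $d(1)=1$; (3) $d(a)=1$ for some $a\in A$; (4) $d$ is surjective; (5) $d(x\oplus y)=(d(x)\oplus y)\wedge(x\oplus d(y))$ for all $x,y\in A$.
   Context: An MV-algebra is an algebra $(A,\oplus,{}^*,0)$ of type $(2,1,0)$ satisfying: $x\oplus(y\oplus z)=(x\oplus y)\oplus z$, $x\oplus y=y\oplus x$, $x\oplus 0=x$, $x^{**}=x$, $x\oplus 0^*=0^*$, $(x^*\oplus y)^*\oplus y=(y^*\oplus x)^*\oplus x$. Put $1=0^*$ and $x\odot y=(x^*\oplus y^* )^*$. The natural order is $x\le y$ iff $x^*\oplus y=1$, with lattice operations $x\vee y=(x\odot y^* )\oplus y$, $x\wedge y=x\odot(x^*\oplus y)$. A $(\odot,\vee)$-derivation on $A$ is a map $d:A\to A$ with $d(x\odot y)=(d(x)\odot y)\vee(x\odot d(y))$ for all $x,y\in A$. *)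

(* Defs.v *)
Record MVAlgebra := {
  carrier :> Type;
  mv_plus : carrier -> carrier -> carrier;
  mv_neg  : carrier -> carrier;
  mv_zero : carrier;
  mv_assoc : forall x y z, mv_plus x (mv_plus y z) = mv_plus (mv_plus x y) z;
  mv_comm  : forall x y, mv_plus x y = mv_plus y x;
  mv_plus0 : forall x, mv_plus x mv_zero = x;
  mv_negK  : forall x, mv_neg (mv_neg x) = x;
  mv_plus1 : forall x, mv_plus x (mv_neg mv_zero) = mv_neg mv_zero;
  mv_luk   : forall x y,
      mv_plus (mv_neg (mv_plus (mv_neg x) y)) y
      = mv_plus (mv_neg (mv_plus (mv_neg y) x)) x
}.

Arguments mv_plus {_}.
Arguments mv_neg {_}.
Arguments mv_zero {_}.

Section Ops.
Variable A : MVAlgebra.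
Definition mv_one : A := mv_neg mv_zero.
Definition mv_odot (x y : A) : A := mv_neg (mv_plus (mv_neg x) (mv_neg y)).
Definition mv_le (x y : A) : Prop := mv_plus (mv_neg x) y = mv_one.
Definition mv_join (x y : A) : A := mv_plus (mv_odot x (mv_neg y)) y.
Definition mv_meet (x y : A) : A := mv_odot x (mv_plus (mv_neg x) y).

Definition odot_join_derivation (d : A -> A) : Prop :=
  forall x y, d (mv_odot x y) = mv_join (mv_odot (d x) y) (mv_odot x (d y)).
End Ops.

Arguments mv_one {_}.
Arguments mv_odot {_}.
Arguments mv_le {_}.
Arguments mv_join {_}.
Arguments mv_meet {_}.
Arguments odot_join_derivation {_}.

(* Main.v *)
Require Import Defs.

Section L.
Variable A : MVAlgebra.
Lemma odot1 (x : A) : mv_odot x mv_one = x.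
Proof. unfold mv_odot, mv_one. rewrite mv_negK, mv_plus0, mv_negK. reflexivity. Qed.
Lemma negx_x (x : A) : mv_plus (mv_neg x) x = mv_one.
Proof.
  pose proof (mv_luk A x (mv_neg mv_zero)) as H.
  rewrite mv_plus1, mv_negK, (mv_comm A mv_zero), mv_plus0 in H.
  unfold mv_one. rewrite <- H. reflexivity.
Qed.
Lemma plus_zero_l (x y : A) : mv_plus x y = mv_zero -> x = mv_zero.
Proof.
  intro H. assert (E : mv_plus (mv_neg x) (mv_plus x y) = mv_one).
  { rewrite mv_assoc, negx_x. unfold mv_one. rewrite mv_comm. apply mv_plus1. }
  rewrite H, mv_plus0 in E. rewrite <- (mv_negK A x), E. unfold mv_one. apply mv_negK.
Qed.
Lemma join_zero (a b : A) : mv_join a b = mv_zero -> a = mv_zero.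
Proof.
  unfold mv_join. intro H.
  assert (Hb : b = mv_zero). { rewrite mv_comm in H. exact (plus_zero_l _ _ H). }
  subst b. apply plus_zero_l in H. fold (@mv_one A) in H. rewrite odot1 in H. exact H.
Qed.
Lemma le_join (a b : A) : mv_le a b -> mv_join a b = b.
Proof.
  unfold mv_le, mv_join, mv_odot. intro H. rewrite mv_negK, H.
  unfold mv_one. rewrite mv_negK, mv_comm. apply mv_plus0.
Qed.
Lemma odot_zero (x : A) : mv_odot x mv_zero = mv_zero.
Proof. unfold mv_odot. rewrite mv_plus1. apply mv_negK. Qed.
Lemma meet_idem (z : A) : mv_meet z z = z.
Proof. unfold mv_meet. rewrite negx_x. apply odot1. Qed.

Variable d : A -> A.
Hypothesis hd : odot_join_derivation d.
Lemma d0 : d mv_zero = mv_zero.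
Proof.
  pose proof (hd mv_zero mv_zero) as H.
  assert (C : mv_odot mv_zero (d mv_zero) = mv_odot (d mv_zero) mv_zero)
    by (unfold mv_odot; rewrite mv_comm; reflexivity).
  rewrite C, !odot_zero in H.
  rewrite H. unfold mv_join. rewrite mv_plus0. fold (@mv_one A). apply odot1.
Qed.
Lemma d_le (x : A) : mv_le (d x) x.
Proof.
  pose proof (hd x (mv_neg x)) as H.
  assert (E : mv_odot x (mv_neg x) = mv_zero).
  { unfold mv_odot. rewrite mv_negK, negx_x. apply mv_negK. }
  rewrite E, d0 in H. symmetry in H. apply join_zero in H.
  unfold mv_odot in H. rewrite mv_negK in H.
  unfold mv_le, mv_one. rewrite <- H. symmetry. apply mv_negK.
Qed.
Lemma d_one_id : d mv_one = mv_one -> forall x, d x = x.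
Proof.
  intros H1 x. pose proof (hd x mv_one) as H. rewrite odot1, H1, odot1 in H.
  rewrite odot1 in H. rewrite H. apply le_join. apply d_le.
Qed.
End L.

Theorem proposition3p4 (A : MVAlgebra) (d : A -> A)
  (hd : odot_join_derivation d) :
  ((forall x, d x = x) <-> d mv_one = mv_one) /\
  (d mv_one = mv_one <-> exists a : A, d a = mv_one) /\
  ((exists a : A, d a = mv_one) <-> (forall y : A, exists x : A, d x = y)) /\
  ((forall y : A, exists x : A, d x = y) <->
     (forall x y : A, d (mv_plus x y) = mv_meet (mv_plus (d x) y) (mv_plus x (d y)))).
Proof.
  assert (E3 : (exists a : A, d a = mv_one) -> d mv_one = mv_one).
  { intros [a Ha]. pose proof (d_le A d hd a) as L. unfold mv_le in L.
    rewrite Ha in L. unfold mv_one at 1 in L. rewrite mv_negK, mv_comm, mv_plus0 in L.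
    subst a. exact Ha. }
  assert (I1 := d_one_id A d hd).
  split; [split|split; [split|split; [split|split]]].
  - intro H. apply H.
  - exact I1.
  - intro H. exists mv_one. exact H.
  - exact E3.
  - intros Hx y. exists y. apply (I1 (E3 Hx)).
  - intro H. destruct (H mv_one) as [a Ha]. exists a. exact Ha.
  - intros H x y. destruct (H mv_one) as [a Ha].
    pose proof (I1 (E3 (ex_intro _ a Ha))) as Id. rewrite !Id. symmetry. apply meet_idem.
  - intro H. intro y. exists y. apply I1. pose proof (H mv_one mv_one) as E.
    assert (O : forall z : A, mv_plus z mv_one = mv_one) by (intro; apply mv_plus1).
    rewrite O, O, mv_comm, O in E. rewrite E. apply meet_idem.
Qed.
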